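(* Let $(S,* )$ be an LD-system. Then $(\widehat S, \vec{*}, \frown)$ is an ALD-system.
   Context: An LD-system is a set with a binary operation $*$ satisfying $x*(y*z)=(x*y)*(x*z)$ (LD). An ALD-system is a set with two binary operations $*,\circ$ satisfying (LD), $x*(y*z)=(x\circ y)*z$ and $x*(y\circ z)=(x*y)\circ(x*z)$. $\widehat S$ is the set of all finite nonempty sequences of elements of $S$; for $\vec s=(s_1,\dots,s_p)$ and $\vec t=(t_1,\dots,t_q)$, $\vec s\frown\vec t=(s_1,\dots,s_p,t_1,\dots,t_q)$ is concatenation and $\vec s\mathbin{\vec{*}}\vec t=(s_1*\cdots*s_p*t_1,\dots,s_1*\cdots*s_p*t_q)$, where missing parentheses are added on the right ($a*b*c$ means $a*(b*c)$). *)

(* Defs.v *)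
From Stdlib Require Import List.
Import ListNotations.

Definition LD {S : Type} (op : S -> S -> S) : Prop :=
  forall x y z, op x (op y z) = op (op x y) (op x z).

Definition ALD {S : Type} (op circ : S -> S -> S) : Prop :=
  LD op /\
  (forall x y z, op x (op y z) = op (circ x y) z) /\
  (forall x y z, op x (circ y z) = circ (op x y) (op x z)).

(* Finite nonempty sequences of elements of S: (s1, [s2;...;sp]). *)
Definition neseq (S : Type) : Type := (S * list S)%type.

Definition ne_to_list {S : Type} (s : neseq S) : list S := fst s :: snd s.

Definition neconcat {S : Type} (s t : neseq S) : neseq S :=
  (fst s, snd s ++ ne_to_list t).

Definition iter_op {S : Type} (op : S -> S -> S) (s : neseq S) (u : S) : S :=
  fold_right op u (ne_to_list s).

Definition nevecop {S : Type} (op : S -> S -> S) (s t : neseq S) : neseq S :=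
  (iter_op op s (fst t), map (iter_op op s) (snd t)).

(* Main.v *)
Require Import Defs.
From Stdlib Require Import List.
Import ListNotations.

Lemma ne_inj {S : Type} (s t : neseq S) : ne_to_list s = ne_to_list t -> s = t.
Proof. destruct s, t; unfold ne_to_list; simpl; intros H; injection H; intros; subst; auto. Qed.

Lemma ne_vec {S : Type} op (s t : neseq S) :
  ne_to_list (nevecop op s t) = map (iter_op op s) (ne_to_list t).
Proof. destruct t; reflexivity. Qed.

Lemma ne_cat {S : Type} (s t : neseq S) :
  ne_to_list (neconcat s t) = ne_to_list s ++ ne_to_list t.
Proof. destruct s; reflexivity. Qed.

Lemma hom_fold {S : Type} (op : S -> S -> S) (f : S -> S)
  (Hf : forall x y, f (op x y) = op (f x) (f y)) l u :
  f (fold_right op u l) = fold_right op (f u) (map f l).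
Proof. induction l; simpl; auto. rewrite Hf, IHl; auto. Qed.

Lemma iter_hom {S : Type} (op : S -> S -> S) (H : LD op) l :
  forall x y, fold_right op (op x y) l = op (fold_right op x l) (fold_right op y l).
Proof. induction l; simpl; intros; auto. rewrite IHl. apply H. Qed.

Theorem lemma1p7 (S : Type) (op : S -> S -> S) :
  LD op -> ALD (nevecop op) (@neconcat S).
Proof.
  intros H. split; [|split]; intros x y z; apply ne_inj;
    rewrite ?ne_vec, ?ne_cat, ?ne_vec, ?map_map.
  - apply map_ext. intros a. unfold iter_op.
    rewrite ne_vec. apply (hom_fold op (iter_op op x) (fun u v => iter_hom op H (ne_to_list x) u v) (ne_to_list y) a).
  - apply map_ext. intros a. unfold iter_op. rewrite ne_cat, fold_right_app. reflexivity.
  - rewrite map_app. reflexivity.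
Qed.
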